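(* If a graph $G$ contains a strongly $1$-shallow $K_t$-minor, then $h_o(G)\geq t$.
   Context: A $K_t$-minor of a graph $G$ is given by $t$ pairwise vertex-disjoint connected subgraphs (bags) of $G$, any two of which are joined by an edge of $G$. A star is $K_{1,s}$ for some $s\ge1$. A $K_t$-minor is strongly $1$-shallow if each bag is either a single vertex or a star, and for every two bags there is a connecting edge of $G$ each of whose endpoints is either the unique vertex of a single-vertex bag or a leaf vertex of a star bag. A signed graph $(G,\sigma)$ is a graph with a map $\sigma:E(G)\to\{+,-\}$. Switching at a vertex $x$ changes the sign of every edge incident with $x$; this generates switching equivalence. $(H,\pi)$ is a minor of $(G,\sigma)$ if there exist a signature $\tau$ switching equivalent to $\sigma$ and pairwise vertex-disjoint subgraphs $B_x$ of $G$ ($x\in V(H)$) such that (i) the positive edges of each $B_x$ under $\tau$ form a connected spanning subgraph of $B_x$, and (ii) for each edge $xy$ of $H$ there is an edge $uv$ of $G$ with $u\in V(B_x)$, $v\in V(B_y)$ and $\tau(uv)=\pi(xy)$. $(G,-)$ denotes $G$ with all edges negative. The odd Hadwiger number $h_o(G)$ is the largest $t$ such that $(K_t,-)$ is a minor of $(G,-)$. *)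

(* Defs.v *)
(* Simple graphs are symmetric irreflexive relations on a finType. *)
From Stdlib Require Import Relations.
From mathcomp Require Import all_boot.
From mathcomp Require Import boolp.
Set Implicit Arguments. Unset Strict Implicit. Unset Printing Implicit Defensive.

Section Defs.
Variable T : finType.
Variable e : rel T.

(* Bag i is encoded by a vertex c i and a set L i of leaves.
   If L i = set0 the bag is the single vertex c i; otherwise it is the star
   with centre c i and leaf set L i (a star K_{1,s}, s = #|L i| >= 1). *)
Definition bag_vertices (c : T) (L : {set T}) : {set T} := c |: L.
Definition bag_ports (c : T) (L : {set T}) : {set T} :=
  if L == set0 then [set c] else L.

Definition strongly_1shallow_Kt_minor (t : nat) : Prop :=
  exists (c : 'I_t -> T) (L : 'I_t -> {set T}),
    [/\ (forall i, c i \notin L i),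
        (forall i l, l \in L i -> e (c i) l),
        (forall i j, i != j ->
            [disjoint bag_vertices (c i) (L i) & bag_vertices (c j) (L j)]) &
        (forall i j, i != j ->
            exists u v, [/\ u \in bag_ports (c i) (L i),
                            v \in bag_ports (c j) (L j) & e u v])].

(* A signature is a map T -> T -> bool, read on the edges of G;
   true = positive (+), false = negative (-). *)
Definition signature := T -> T -> bool.

Definition switch_at (x : T) (s : signature) : signature :=
  fun u v => if (u == x) (+) (v == x) then ~~ s u v else s u v.

Definition switch_step (s1 s2 : signature) : Prop := exists x, s2 = switch_at x s1.

Definition switching_equivalent (s1 s2 : signature) : Prop :=
  clos_refl_sym_trans signature switch_step s1 s2.

Definition all_neg : signature := fun _ _ => false.

(* (K_t, -) is a minor of (G, sigma): bags B_x = (S x, F x) are subgraphs of G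
   (vertex set S x, edge relation F x with edges of G inside S x). *)
Definition signed_Kt_neg_minor (sigma : signature) (t : nat) : Prop :=
  exists (tau : signature) (S : 'I_t -> {set T}) (F : 'I_t -> rel T),
    [/\ switching_equivalent sigma tau,
        (forall x u v, F x u v -> [/\ e u v, u \in S x & v \in S x]),
        (forall x y, x != y -> [disjoint S x & S y]),
        (forall x, S x != set0 /\
            forall u v, u \in S x -> v \in S x ->
              connect (fun a b => F x a b && tau a b) u v) &
        (* every edge xy of K_t (negative in (K_t,-)) is realised *)
        (forall x y, x != y ->
            exists u v, [/\ u \in S x, v \in S y, e u v & tau u v = false])].

(* odd Hadwiger number: largest t with (K_t,-) a minor of (G,-)
   (bags are nonempty and disjoint, so t <= #|T|). *)
Definition odd_hadwiger : nat :=
  \max_(k < #|T|.+1 | `[< signed_Kt_neg_minor all_neg k >]) k.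

End Defs.

(* Main.v *)
Require Import Defs.
From mathcomp Require Import all_boot.
From mathcomp Require Import boolp.
From Stdlib Require Relations.Relation_Operators.

Set Implicit Arguments. Unset Strict Implicit. Unset Printing Implicit Defensive.

Lemma fold_sw (T : finType) (s : signature T) (xs : seq T) u v : uniq xs ->
  foldr (@switch_at T) s xs u v = s u v (+) (u \in xs) (+) (v \in xs).
Proof.
elim: xs => [|x xs IH] /=; first by rewrite !addbF.
case/andP=> xnin /IH {}IH; rewrite /switch_at IH !in_cons.
case: (eqVneq u x) => [->|]; case: (eqVneq v x) => [->|] /=;
  rewrite ?(negPf xnin) //=;
  by case: (s _ _); case: (_ \in xs); case: (_ \in xs).
Qed.

Lemma fold_equiv (T : finType) (s : signature T) (xs : seq T) :
  switching_equivalent s (foldr (@switch_at T) s xs).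
Proof.
elim: xs => [|x xs IH] /=; first exact: Relation_Operators.rst_refl.
apply: Relation_Operators.rst_trans IH _; apply: Relation_Operators.rst_step; by exists x.
Qed.

Theorem lemma2p1 (T : finType) (e : rel T)
  (e_sym : symmetric e) (e_irr : irreflexive e) (t : nat) :
  strongly_1shallow_Kt_minor e t -> t <= odd_hadwiger e.
Proof.
case=> c [L [cL eL disj conn]].
have cin i : c i \in bag_vertices (c i) (L i) by rewrite /bag_vertices setU11.
have lin i l : l \in L i -> l \in bag_vertices (c i) (L i)
  by move=> H; rewrite /bag_vertices setU1r.
have same i j x : x \in bag_vertices (c i) (L i) ->
   x \in bag_vertices (c j) (L j) -> i = j.
  move=> Hi Hj; apply/eqP; apply/negPn/negP => /disj /disjointFr /(_ Hi); by rewrite Hj.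
pose X := [set c i | i in [pred i : 'I_t | L i != set0]].
have lX i l : l \in L i -> l \notin X.
  move=> Hl; apply/negP => /imsetP [j Hj El].
  subst l; have eij := same _ _ _ (lin _ _ Hl) (cin j); subst j.
  by move: Hl; rewrite (negPf (cL _)).
have pX i p : p \in bag_ports (c i) (L i) -> p \notin X.
  rewrite /bag_ports; case: eqP => [H0|_]; last exact: lX.
  rewrite in_set1 => /eqP ->; apply/negP => /imsetP [j Hj Ec].
  have eij := same _ _ _ (cin i) (etrans (f_equal _ Ec) (cin j)) .
  by subst j; rewrite inE H0 eqxx in Hj.
have cX i : L i != set0 -> c i \in X by move=> H; apply: imset_f.
pose tau := foldr (@switch_at T) (@all_neg T) (enum X).
have tauE u v : tau u v = (u \in X) (+) (v \in X).
  by rewrite /tau fold_sw ?enum_uniq // !mem_enum.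
have Hmin : signed_Kt_neg_minor e (@all_neg T) t.
  exists tau, (fun i => bag_vertices (c i) (L i)),
    (fun i u v => ((u == c i) && (v \in L i)) || ((v == c i) && (u \in L i))).
  split.
  - exact: fold_equiv.
  - move=> i u v /orP [/andP [/eqP -> H]|/andP [/eqP -> H]]; split;
      rewrite ?cin ?lin //; [exact: eL | rewrite e_sym; exact: eL].
  - exact: disj.
  - move=> i; split; first by apply/set0Pn; exists (c i).
    have key w : w \in bag_vertices (c i) (L i) ->
      connect (fun a b => (((a == c i) && (b \in L i)) || ((b == c i) && (a \in L i))) && tau a b) (c i) w
      /\ connect (fun a b => (((a == c i) && (b \in L i)) || ((b == c i) && (a \in L i))) && tau a b) w (c i).
      rewrite /bag_vertices in_setU1 => /orP [/eqP ->|Hw]; first by split.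
      have Li0 : L i != set0 by apply/set0Pn; exists w.
      split; apply: connect1; rewrite tauE cX // (negPf (lX _ _ Hw)) eqxx Hw ?orbT //.
    move=> u v /key [_ H1] /key [H2 _]; exact: connect_trans H1 H2.
  - move=> i j /conn [u [v [Hu Hv Huv]]]; exists u, v; split => //.
    + by move: Hu; rewrite /bag_ports; case: eqP => _; [rewrite in_set1 => /eqP ->; apply: cin | apply: lin].
    + by move: Hv; rewrite /bag_ports; case: eqP => _; [rewrite in_set1 => /eqP ->; apply: cin | apply: lin].
    + by rewrite tauE (negPf (pX _ _ Hu)) (negPf (pX _ _ Hv)).
have ht : t < #|T|.+1.
  rewrite ltnS -{1}(card_ord t) -(card_imset _ (_ : injective c)) ?max_card //.
  by move=> i j Ec; apply: (same _ _ (c i)); rewrite ?cin // Ec cin.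
rewrite /odd_hadwiger.
apply: (@leq_bigmax_cond _ _ (fun k : 'I_#|T|.+1 => nat_of_ord k) (Ordinal ht)).
exact/asboolT.
Qed.
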